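(* For any $\bm f\in\mathscr{F}$, the function $x_{\bm f}$ is not differentiable at any point $t\in[0,1]$ at which $f_\infty$ is continuous and $f_\infty(t)\neq0$. In particular, $x_{\bm f}$ is not differentiable at almost every point of $\{f_\infty\neq0\}$.
   Context: Faber--Schauder functions: $e_{0,0}(t)=\max\{0,\min\{t,1-t\}\}$, $e_{n,k}(t)=2^{-n/2}e_{0,0}(2^nt-k)$ for $n\ge1$, $k=0,\dots,2^n-1$. $\mathscr{F}$ is the class of sequences $\bm f=(f_n)_{n\ge0}$ of bounded functions $f_n:[0,1]\to\mathbb{R}$ converging uniformly to a Riemann integrable function $f_\infty$. For $\bm f\in\mathscr{F}$, $x_{\bm f}:=\sum_{n=0}^\infty\sum_{k=0}^{2^n-1}f_n(k2^{-n})e_{n,k}$. *)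

(* Defs.v *)
From HB Require Import structures.
From mathcomp Require Import all_boot all_order all_algebra.
From mathcomp Require Import all_classical all_reals all_analysis.
Set Implicit Arguments. Unset Strict Implicit. Unset Printing Implicit Defensive.
Import Order.TTheory GRing.Theory Num.Theory.
Import numFieldNormedType.Exports.
Local Open Scope classical_set_scope.
Local Open Scope ring_scope.

Section FaberSchauder.
Variable R : realType.

Definition e00 (t : R) : R := Num.max 0 (Num.min t (1 - t)).

Definition schauder (n k : nat) (t : R) : R :=
  (2 : R) `^ (- (n%:R / 2)) * e00 (2 ^+ n * t - k%:R).

Definition riemann_integrable01 (f : R -> R) : Prop :=
  exists I : R, forall eps : R, 0 < eps -> exists delta : R, 0 < delta /\
    forall (m : nat) (s tg : nat -> R),
      s 0%N = 0 -> s m = 1 ->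
      (forall i, (i < m)%N -> s i < s i.+1) ->
      (forall i, (i < m)%N -> s i.+1 - s i < delta) ->
      (forall i, (i < m)%N -> s i <= tg i <= s i.+1) ->
      `| \sum_(i < m) f (tg i) * (s i.+1 - s i) - I | < eps.

Definition in_classF (f : nat -> R -> R) (finf : R -> R) : Prop :=
  (forall n, exists M : R, forall t, 0 <= t <= 1 -> `|f n t| <= M) /\
  (forall eps : R, 0 < eps -> exists N : nat, forall n, (N <= n)%N ->
     forall t, 0 <= t <= 1 -> `|f n t - finf t| < eps) /\
  riemann_integrable01 finf.

Definition x_f (f : nat -> R -> R) (t : R) : R :=
  limn (fun N : nat =>
    \sum_(n < N) \sum_(k < 2 ^ n) f n (k%:R / 2 ^+ n) * schauder n k t).

Definition differentiable01 (x : R -> R) (t : R) : Prop :=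
  exists l : R,
    (fun s => (x s - x t) / (s - t)) s @[s --> within `[0, 1] (dnbhs t)] --> l.

Definition continuous01_at (g : R -> R) (t : R) : Prop :=
  g s @[s --> within `[0, 1] (nbhs t)] --> g t.

End FaberSchauder.

(* Main.v *)
Require Import Defs.
From HB Require Import structures.
From mathcomp Require Import all_boot all_order all_algebra.
From mathcomp Require Import all_classical all_reals all_analysis.
From mathcomp Require Import ring lra zify.
Set Implicit Arguments. Unset Strict Implicit. Unset Printing Implicit Defensive.
Import Order.TTheory GRing.Theory Num.Theory.
Import numFieldNormedType.Exports.
Local Open Scope classical_set_scope.
Local Open Scope ring_scope.

Section S.
Variable R : realType.

Implicit Types (x u w : R).

Lemma e00_le0 x : x <= 0 -> e00 x = 0.
Proof. move=> h; rewrite /e00; apply/eqP; rewrite eq_le; apply/andP; split.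
  by rewrite ge_max lexx /= ge_min h.
  by rewrite le_max lexx. Qed.
Lemma e00_ge1 x : 1 <= x -> e00 x = 0.
Proof. move=> h; rewrite /e00; apply/eqP; rewrite eq_le; apply/andP; split.
  by rewrite ge_max lexx /= ge_min subr_le0 h orbT.
  by rewrite le_max lexx. Qed.
Lemma e00_l x : 0 <= x <= 1/2 -> e00 x = x.
Proof. move=> /andP[h1 h2]; rewrite /e00.
have -> : Num.min x (1 - x) = x by apply/min_idPl; lra.
by apply/max_idPr. Qed.
Lemma e00_r x : 1/2 <= x <= 1 -> e00 x = 1 - x.
Proof. move=> /andP[h1 h2]; rewrite /e00.
have -> : Num.min x (1 - x) = 1 - x by apply/min_idPr; lra.
by apply/max_idPr; lra. Qed.

Lemma e00_mid u w : 0 <= w ->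
  (0 <= u \/ u + 2 * w <= 0) -> (1/2 <= u \/ u + 2 * w <= 1/2) ->
  (1 <= u \/ u + 2 * w <= 1) ->
  e00 (u + w) = (e00 u + e00 (u + 2 * w)) / 2.
Proof.
move=> w0 [h0|h0]; last first.
  by rewrite !e00_le0 //; lra.
move=> [h1|h1] [h2|h2].
- by rewrite !e00_ge1 //; lra.
- by rewrite !e00_r; [lra|lra|lra|lra].
- by rewrite !e00_ge1 //; lra.
- by rewrite !e00_l; [lra|lra|lra|lra].
Qed.

Lemma e00_natsub (a b : nat) : e00 (a%:R - b%:R : R) = 0.
Proof.
case: (leqP a b) => h.
  by apply: e00_le0; rewrite subr_le0 ler_nat.
apply: e00_ge1; have : (b.+1)%:R <= a%:R :> R by rewrite ler_nat. rewrite -natr1; lra.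
Qed.

Lemma q_gt0 (n : nat) : 0 < (2 : R) ^+ n.
Proof. by rewrite exprn_gt0. Qed.

Lemma dyadic_index (n : nat) (t : R) : 0 <= t <= 1 ->
  exists k, (k < 2 ^ n)%N /\ k%:R / 2 ^+ n <= t <= k.+1%:R / 2 ^+ n.
Proof.
move=> t01; elim: n => [|n [k [kn /andP[h1 h2]]]].
  by exists 0%N; rewrite expr0 !divr1; split.
have q0 := q_gt0 n.
have E1 : k%:R / 2 ^+ n = (k.*2)%:R / 2 ^+ n.+1 :> R.
  by rewrite -muln2 natrM exprS; field; rewrite gt_eqF.
have E2 : k.+1%:R / 2 ^+ n = (k.*2.+1).+1%:R / 2 ^+ n.+1 :> R.
  rewrite -[X in X%:R / _ ^+ n.+1]addn2 -muln2 natrD natrM exprS -natr1.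
  by field; rewrite gt_eqF.
case: (lerP t ((k.*2.+1)%:R / 2 ^+ n.+1)) => h.
  exists k.*2; split; first by rewrite expnS -muln2; lia.
  by rewrite -E1 h1 h.
exists k.*2.+1; split; first by rewrite expnS -muln2; lia.
by rewrite (ltW h) -E2 h2.
Qed.

Definition dd (g : R -> R) (n k : nat) : R :=
  g ((k.*2.+1)%:R / 2 ^+ n.+1) - (g (k%:R / 2 ^+ n) + g (k.+1%:R / 2 ^+ n)) / 2.

Lemma kink (N k k' d : nat) :
  N%:R / 2 ^+ d <= k%:R / 2 ^+ d - k'%:R :> R \/
  k.+1%:R / 2 ^+ d - k'%:R <= N%:R / 2 ^+ d :> R.
Proof.
have q0 := q_gt0 d.
have E : forall a : nat, a%:R / 2 ^+ d - k'%:R = (a%:R - k'%:R * 2 ^+ d) / 2 ^+ d :> R.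
  by move=> a; field; rewrite gt_eqF.
rewrite !E.
case: (leqP (N + k' * 2 ^ d) k) => h; [left|right];
  rewrite ler_pM2r ?invr_gt0 //.
  have : (N + k' * 2 ^ d)%:R <= k%:R :> R by rewrite ler_nat.
  rewrite natrD natrM natrX; lra.
have : k.+1%:R <= (N + k' * 2 ^ d)%:R :> R by rewrite ler_nat.
rewrite natrD natrM natrX; lra.
Qed.

Lemma e00_half : e00 (1/2 : R) = 1/2.
Proof. by rewrite e00_l //; apply/andP; split; lra. Qed.

Lemma dd_e00 j k' n k : (k < 2 ^ n)%N ->
  dd (fun s => e00 (2 ^+ j * s - k'%:R)) n k =
  if (j == n) && (k' == k) then 1/2 else 0.
Proof.
move=> kn; rewrite /dd.
case: (ltnP n j) => hj.
  have Ej : j = (n.+1 + (j - n.+1))%N by rewrite subnKC.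
  move: (j - n.+1)%N Ej => d Ej.
  have qn := q_gt0 n.
  have A1 : 2 ^+ j * (k%:R / 2 ^+ n) = (k * 2 * 2 ^ d)%:R :> R.
    by rewrite Ej !natrM natrX exprD exprS; field; rewrite gt_eqF.
  have A2 : 2 ^+ j * (k.+1%:R / 2 ^+ n) = (k.+1 * 2 * 2 ^ d)%:R :> R.
    by rewrite Ej !natrM natrX exprD exprS; field; rewrite gt_eqF.
  have A3 : 2 ^+ j * ((k.*2.+1)%:R / 2 ^+ n.+1) = (k.*2.+1 * 2 ^ d)%:R :> R.
    by rewrite Ej !natrM natrX exprD; field; rewrite gt_eqF // exprn_gt0.
  rewrite A1 A2 A3 !e00_natsub (gtn_eqF hj) /=; lra.
have En : n = (j + (n - j))%N by rewrite subnKC.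
move: (n - j)%N En => d En.
have qj := q_gt0 j; have qd := q_gt0 d.
set u := k%:R / 2 ^+ d - k'%:R : R.
set w := 1 / 2 ^+ d.+1 : R.
have w0 : 0 <= w by rewrite /w divr_ge0 // ltW // q_gt0.
have B1 : 2 ^+ j * (k%:R / 2 ^+ n) - k'%:R = u.
  by rewrite /u En exprD; field; rewrite !gt_eqF.
have B2 : 2 ^+ j * (k.+1%:R / 2 ^+ n) - k'%:R = u + 2 * w.
  by rewrite /u /w En exprD exprS -natr1; field; rewrite !gt_eqF.
have B3 : 2 ^+ j * ((k.*2.+1)%:R / 2 ^+ n.+1) - k'%:R = u + w.
  by rewrite /u /w En -addnS exprD exprS -[(k.*2).+1%:R]natr1 -muln2 natrM; field; rewrite !gt_eqF.
have Eu : u + 2 * w = k.+1%:R / 2 ^+ d - k'%:R.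
  by rewrite /u /w exprS -natr1; field; rewrite !gt_eqF.
rewrite B1 B2 B3.
have K0 : 0 <= u \/ u + 2 * w <= 0.
  by case: (kink 0 k k' d); rewrite ?mulr0n ?mul0r => h; [left|right];
    move: h; rewrite -/u ?(esym Eu) => h; lra.
have K1 : 1 <= u \/ u + 2 * w <= 1.
  case: (kink (2 ^ d) k k' d); rewrite natrX divff ?gt_eqF // => h;
    [left|right]; move: h; rewrite -/u ?(esym Eu) => h; lra.
have Hmid : (1/2 <= u \/ u + 2 * w <= 1/2) -> e00 (u + w) - (e00 u + e00 (u + 2 * w)) / 2 = 0.
  by move=> K2; rewrite (e00_mid w0 K0 K2 K1); lra.
case: d En @u @w qd w0 B1 B2 B3 Eu K0 K1 Hmid => [|d] En u w qd w0 B1 B2 B3 Eu K0 K1 Hmid.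
  rewrite addn0 in En; subst n; rewrite eqxx /=.
  case: eqP => [kk|kk].
    subst k'.
    have u0 : u = 0 by rewrite /u expr0 divr1 subrr.
    have w2 : w = 1/2 by rewrite /w expr1.
    rewrite u0 w2 add0r e00_half.
    rewrite e00_le0 // e00_ge1; lra.
  apply: Hmid.
  case: (ltngtP k k') => h; [right|left|by case: kk].
    have : k.+1%:R <= k'%:R :> R by rewrite ler_nat.
    rewrite Eu expr0 divr1; lra.
  have : k'.+1%:R <= k%:R :> R by rewrite ler_nat.
  rewrite /u expr0 divr1 -natr1; lra.
have -> : (j == n) = false.
  by rewrite En; apply/negbTE; rewrite -[X in X == _]addn0 eqn_add2l.
apply: Hmid.
have H12 : (2 ^ d)%:R / 2 ^+ d.+1 = 1/2 :> R.
  by rewrite natrX exprS; field; rewrite gt_eqF // q_gt0.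
case: (kink (2 ^ d) k k' d.+1); rewrite H12 => h; [left|right];
  move: h; rewrite -/u ?(esym Eu) => h; lra.
Qed.

Lemma dd_schauder j k' n k : (k < 2 ^ n)%N ->
  dd (schauder j k') n k =
  if (j == n) && (k' == k) then 2 `^ (- (n%:R / 2)) / 2 else 0.
Proof.
move=> kn.
have -> : dd (schauder j k') n k =
   2 `^ (- (j%:R / 2)) * dd (fun s => e00 (2 ^+ j * s - k'%:R)) n k.
  by rewrite /dd /schauder; ring.
rewrite dd_e00 //; case: ifP => [/andP[/eqP-> _]|_]; last by rewrite mulr0.
by rewrite mulrA mulr1.
Qed.

Definition P (f : nat -> R -> R) (N : nat) (t : R) : R :=
  \sum_(n < N) \sum_(k < 2 ^ n) f n (k%:R / 2 ^+ n) * schauder n k t.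

Lemma dd_sum (I : Type) (r : seq I) (F G H : I -> R) :
  \sum_(i <- r) F i - (\sum_(i <- r) G i + \sum_(i <- r) H i) / 2 =
  \sum_(i <- r) (F i - (G i + H i) / 2).
Proof. by rewrite -big_split mulr_suml -sumrB. Qed.

Lemma dd_P (f : nat -> R -> R) N n k :
  dd (P f N) n k = \sum_(j < N) \sum_(k' < 2 ^ j)
     f j (k'%:R / 2 ^+ j) * dd (schauder j k') n k.
Proof.
rewrite /dd /P dd_sum; apply: eq_bigr => j _.
rewrite dd_sum; apply: eq_bigr => k' _; ring.
Qed.

Lemma schauder_dyadic j k' n K : (n <= j)%N ->
  schauder j k' (K%:R / 2 ^+ n : R) = 0.
Proof.
move=> hj; rewrite /schauder.
have -> : 2 ^+ j * (K%:R / 2 ^+ n) = (K * 2 ^ (j - n))%:R :> R.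
  rewrite -(subnKC hj) natrM natrX exprD addKn.
  by field; rewrite gt_eqF // q_gt0.
by rewrite e00_natsub mulr0.
Qed.

Lemma P_dyadic (f : nat -> R -> R) n K d : P f (n + d) (K%:R / 2 ^+ n) = P f n (K%:R / 2 ^+ n).
Proof.
elim: d => [|d IH]; first by rewrite addn0.
rewrite addnS /P big_ord_recr /= -/(P f (n + d) _) IH big1 ?addr0 // => k' _.
by rewrite schauder_dyadic ?mulr0 // leq_addr.
Qed.

Lemma xf_dyadic (f : nat -> R -> R) n K N : (n <= N)%N ->
  x_f f (K%:R / 2 ^+ n) = P f N (K%:R / 2 ^+ n).
Proof.
move=> hN; rewrite -(subnKC hN) P_dyadic /x_f.
apply: cvg_lim => //; apply: cvg_near_cst.
exists n => // M /= hM.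
by rewrite -(subnKC hM) -/(P f _ _) P_dyadic.
Qed.

Lemma dd_xf (f : nat -> R -> R) n k : (k < 2 ^ n)%N ->
  dd (x_f f) n k = f n (k%:R / 2 ^+ n) * (2 `^ (- (n%:R / 2)) / 2).
Proof.
move=> kn.
have -> : dd (x_f f) n k = dd (P f n.+2) n k.
  have l2 : (n <= n.+2)%N by rewrite leqW.
  rewrite /dd (@xf_dyadic f n.+1 k.*2.+1 n.+2) //.
  by rewrite (@xf_dyadic f n k n.+2 l2) (@xf_dyadic f n k.+1 n.+2 l2).
rewrite dd_P !big_ord_recr /=.
rewrite big1 ?add0r; last first.
  move=> j _; apply: big1 => k' _.
  by rewrite dd_schauder // (ltn_eqF (ltn_ord j)) mulr0.
rewrite [X in _ + X]big1 ?addr0; last first.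
  by move=> k' _; rewrite dd_schauder // (gtn_eqF (ltnSn n)) mulr0.
rewrite (bigD1 (Ordinal kn)) //= big1 ?addr0; last first.
  move=> k' hk; rewrite dd_schauder // eqxx /=.
  by case: eqP => [h|]; [case/eqP: hk; apply: val_inj | rewrite mulr0].
by rewrite dd_schauder // !eqxx.
Qed.

Lemma near_within01_dnbhs (Q : R -> Prop) (t : R) :
  (\forall s \near within `[0, 1] (dnbhs t), Q s) ->
  exists2 e : R, 0 < e & forall s, 0 <= s <= 1 -> s != t -> `|s - t| < e -> Q s.
Proof.
rewrite /within /dnbhs /within => /nbhs_ballP[e e0 H].
exists e => // s s01 st ste.
by apply: H => //=; rewrite /ball /= distrC.
Qed.

Lemma cont01_eps (g : R -> R) (t : R) : continuous01_at g t ->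
  forall eps, 0 < eps -> exists2 e : R, 0 < e &
    forall s, 0 <= s <= 1 -> `|s - t| < e -> `|g s - g t| < eps.
Proof.
move=> /cvgrPdist_lt H eps eps0; move: (H eps eps0).
rewrite /within => /nbhs_ballP[e e0 H1].
exists e => // s s01 ste.
by rewrite distrC; apply: (H1 s) => //=; rewrite /ball /= distrC.
Qed.

Lemma pick_n (N0 : nat) (m : R) : 0 < m ->
  exists n, (N0 <= n)%N /\ (2 ^+ n)^-1 < m.
Proof.
move=> m0; set T := Num.Def.trunc (m^-1).
exists (N0 + T.+1)%N; split; first exact: leq_addr.
have h1 : m^-1 < T.+1%:R := truncnS_gt _.
have h2 : (T.+1 <= 2 ^ (N0 + T.+1))%N.
  apply: leq_trans (ltnW (ltn_expl _ (isT : (1 < 2)%N))).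
  exact: leq_addl.
have h3 : T.+1%:R <= (2 ^ (N0 + T.+1))%:R :> R by rewrite ler_nat.
rewrite natrX in h3.
rewrite invf_plt ?posrE ?exprn_gt0 //.
exact: lt_le_trans h1 h3.
Qed.

Lemma powR_ge_inv (n : nat) : (2 ^+ n)^-1 <= 2 `^ (- (n%:R / 2)) :> R.
Proof.
rewrite -powR_mulrn // -powRN; apply: ler_powR; first lra.
have : 0 <= n%:R :> R by [].
lra.
Qed.


Lemma leb_itv (a b : R) : a <= b -> (@lebesgue_measure R `[a, b]) = (b - a)%:E.
Proof.
move=> ab; rewrite lebesgue_measure_itv /= lte_fin.
case: ltP => h; first by rewrite -EFinD.
have -> : a = b by apply/eqP; rewrite eq_le ab.
by rewrite subrr.
Qed.

Lemma small_pos (r : R) : (forall j : nat, r <= j.+1%:R^-1) -> r <= 0.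
Proof.
move=> H; rewrite leNgt; apply/negP => r0.
have := H (Num.Def.trunc (r^-1)).
have h1 : r^-1 < (Num.Def.trunc (r^-1)).+1%:R := truncnS_gt _.
have : (Num.Def.trunc (r^-1)).+1%:R^-1 < r.
  by rewrite invf_plt ?posrE // ltr0n.
move=> a b; have := lt_le_trans a b; by rewrite ltxx.
Qed.

Lemma neg_eps (N : set R) :
  (forall e : R, 0 < e -> exists A : set R,
     [/\ measurable A, N `<=` A & (lebesgue_measure A <= e%:E)%E]) ->
  (@lebesgue_measure R).-negligible N.
Proof.
move=> H.
have H' : forall j : nat, exists A : set R, [/\ measurable A, N `<=` A &
     (lebesgue_measure A <= (j.+1%:R^-1)%:E)%E].
  by move=> j; apply: H; rewrite invr_gt0.
have [F HF] := choice H'.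
have mF : forall j, measurable (F j) by move=> j; case: (HF j).
exists (\bigcap_j F j); split.
- by apply: bigcapT_measurable.
- apply/eqP; rewrite -measure_le0.
  have hB : forall j, (lebesgue_measure (\bigcap_j F j) <= (j.+1%:R^-1)%:E)%E.
    move=> j; apply: le_trans (let: And3 _ _ h := HF j in h).
    apply: (le_measure (@lebesgue_measure R)); rewrite ?inE //.
      exact: bigcapT_measurable.
      exact: mF.
    exact: bigcap_inf.
  have key : forall x : \bar R, (0 <= x)%E ->
      (forall j : nat, (x <= (j.+1%:R^-1)%:E)%E) -> (x <= 0)%E.
    case=> [r| |] //= _ hx.
      suff : r <= 0 by rewrite -lee_fin.
      by apply: small_pos => j; have := hx j; rewrite lee_fin.
    by have := hx 0%N.
  apply: key => //; exact: measure_ge0.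
- by move=> t Nt j _; case: (HF j) => _ /(_ t Nt).
Qed.

Definition Dj (g : R -> R) (j : nat) : set R :=
  [set t | 0 <= t <= 1 /\ forall d : R, 0 < d -> exists s, 0 <= s <= 1 /\
     `|s - t| < d /\ j.+1%:R^-1 <= `|g s - g t|].

Lemma trunc_inv (e : R) : 0 < e -> (Num.Def.trunc (e^-1)).+1%:R^-1 < e.
Proof.
move=> e0; have h1 : e^-1 < (Num.Def.trunc (e^-1)).+1%:R := truncnS_gt _.
by rewrite invf_plt ?posrE // ltr0n.
Qed.

Lemma notcont_D (g : R -> R) (t : R) : 0 <= t <= 1 -> ~ continuous01_at g t ->
  exists j, Dj g j t.
Proof.
move=> t01 nc; apply/not_existsP => H; apply: nc.
apply/cvgrPdist_lt => e e0.
set j := Num.Def.trunc (e^-1).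
have je : j.+1%:R^-1 < e := trunc_inv e0.
have nD := H j.
have [d [d0 Hd]] : exists d, 0 < d /\ forall s, 0 <= s <= 1 -> `|s - t| < d ->
    `|g s - g t| < j.+1%:R^-1.
  apply/not_existsP => hall; apply: nD; split => // d d0.
  apply/not_existsP => hs; apply: (hall d); split => // s s01 sd.
  rewrite ltNge; apply/negP => hge; apply: (hs s); split => //.
rewrite /within; apply/nbhs_ballP; exists d => // s; rewrite /ball /= => hs s01.
rewrite /= in_itv /= in s01.
rewrite distrC; apply: lt_trans je; apply: Hd => //; by rewrite distrC.
Qed.

Definition sp (n i : nat) : R := i%:R / 2 ^+ n.

Lemma sp_S n i : sp n i.+1 = sp n i + (2 ^+ n)^-1.
Proof. by rewrite /sp -natr1 mulrDl mul1r. Qed.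

Lemma sp_ge0 n i : 0 <= sp n i.
Proof. by rewrite /sp divr_ge0 // ltW // (q_gt0 _). Qed.

Definition bad (g : R -> R) (n : nat) (c : R) (i : nat) : Prop :=
  exists x y, sp n i <= x <= sp n i.+1 /\ sp n i <= y <= sp n i.+1 /\
    c <= g x - g y.

Lemma bad_of (g : R -> R) n c i x y : sp n i <= x <= sp n i.+1 ->
  sp n i <= y <= sp n i.+1 -> c <= `|g x - g y| -> bad g n c i.
Proof.
move=> hx hy; rewrite ler_normr => /orP[h|h].
  by exists x, y.
by exists y, x; split => //; split => //; rewrite opprB in h.
Qed.

Lemma claim (g : R -> R) n c a b : 0 <= a <= 1 -> 0 <= b <= 1 -> a <= b ->
  b - a < (2 ^+ n)^-1 -> 2 * c <= `|g a - g b| -> 0 <= c ->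
  exists i, [/\ (i < 2 ^ n)%N, bad g n c i, sp n i - (2 ^+ n)^-1 <= a &
                b <= sp n i.+1 + (2 ^+ n)^-1].
Proof.
move=> a01 b01 ab bah H c0.
have h0 : 0 < (2 ^+ n)^-1 :> R by rewrite invr_gt0 (q_gt0 _).
have [k [kM /andP[k1 k2]]] := dyadic_index n a01.
rewrite -/(sp n k) -/(sp n k.+1) in k1 k2.
have E1 := sp_S n k; have E2 := sp_S n k.+1.
case: (lerP b (sp n k.+1)) => hb.
  exists k; split => //; last by lra.
    apply: (@bad_of g n c k a b); [apply/andP; split|apply/andP; split|]; lra.
  lra.
have kM' : (k.+1 < 2 ^ n)%N.
  have : sp n k.+1 < 1 by case/andP: b01 => _ b1; lra.
  by rewrite /sp ltr_pdivrMr ?(q_gt0 _) // mul1r -natrX ltr_nat.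
have tri : `|g a - g b| <= `|g a - g (sp n k.+1)| + `|g (sp n k.+1) - g b|.
  by rewrite (le_trans _ (ler_normD _ _)) // addrA subrK.
case: (lerP c `|g a - g (sp n k.+1)|) => hc.
  exists k; split => //; last by lra.
    apply: (@bad_of g n c k a (sp n k.+1)); [apply/andP; split|apply/andP; split|]; lra.
  lra.
exists k.+1; split => //; last by lra.
  apply: (@bad_of g n c k.+1 (sp n k.+1) b); [apply/andP; split|apply/andP; split|]; lra.
lra.
Qed.

Definition cov (b : nat -> bool) (a : nat -> R) (M : nat) (hh : R) : set R :=
  \big[setU/set0]_(i < M) (if b i then [set` `[a i - hh, a i.+1 + hh]] else set0).

Lemma leb_cover (b : nat -> bool) (a : nat -> R) (M : nat) (hh : R) :
  0 <= hh -> (forall i, a i.+1 = a i + hh) ->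
  (@lebesgue_measure R (cov b a M hh) <=
   (\sum_(i < M) (if b i then 3 * hh else 0)%R)%:E)%E.
Proof.
move=> hh0 Ea.
rewrite -sumEFin.
apply: (@le_trans _ _ (\sum_(k < M) @lebesgue_measure R
   (if b k then [set` `[(a k - hh)%R, (a k.+1 + hh)%R]] else set0))%E).
  apply: (content_subadditive (@lebesgue_measure R) (A := cov b a M hh)
    (F := fun k => if b k then [set` `[(a k - hh)%R, (a k.+1 + hh)%R]] else set0) (n := M)).
  - by move=> k _; case: (b k) => //; exact: measurable_itv.
  - by apply: bigsetU_measurable => k _; case: (b k) => //; exact: measurable_itv.
  - exact: subset_refl.
apply: lee_sum => i _; case: (b i); last by rewrite measure0.
rewrite leb_itv; last by rewrite Ea; lra.
by rewrite lee_fin Ea; lra.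
Qed.

Lemma mem_cov (b : nat -> bool) (a : nat -> R) (M : nat) (hh t : R) i :
  (i < M)%N -> b i -> a i - hh <= t <= a i.+1 + hh -> cov b a M hh t.
Proof.
move=> iM bi ht; rewrite /cov -(bigcup_mkord M (fun i => if b i then [set` `[a i - hh, a i.+1 + hh]] else set0)); exists i => //=.
by rewrite bi /= in_itv.
Qed.

Lemma Dj_neg (g : R -> R) (j : nat) : riemann_integrable01 g ->
  (@lebesgue_measure R).-negligible (Dj g j).
Proof.
move=> [I HI]; apply: neg_eps => e e0.
set th : R := j.+1%:R^-1.
have th0 : 0 < th by rewrite invr_gt0.
set c : R := th / 2.
have c0 : 0 < c by rewrite divr_gt0.
have c2 : 2 * c = th by rewrite /c; field.
set eps : R := e * c / 6.
have eps0 : 0 < eps by rewrite /eps divr_gt0 // mulr_gt0.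
have [dl [dl0 Hdl]] := HI eps eps0.
have [n [_ hn]] := pick_n 0 dl0.
set h : R := (2 ^+ n)^-1 in hn *.
have h0 : 0 < h by rewrite invr_gt0 (q_gt0 _).
have Es : forall i, sp n i.+1 - sp n i = h.
  by move=> i; rewrite sp_S /h; ring.
have Hc : forall i : nat, exists p : R * R,
   [/\ sp n i <= p.1 <= sp n i.+1, sp n i <= p.2 <= sp n i.+1,
       (bad g n c i -> c <= g p.1 - g p.2) & (~ bad g n c i -> p.1 = p.2)].
  move=> i; case: (pselect (bad g n c i)) => b.
    by case: (b) => x [y [hx [hy hxy]]]; exists (x, y); split.
  have := Es i => E.
  by exists (sp n i, sp n i); split => //=; apply/andP; split => //; lra.
have [p Hp] := choice Hc.
set M := (2 ^ n)%N.
have s0 : sp n 0 = 0 by rewrite /sp mul0r.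
have sM : sp n M = 1 by rewrite /sp /M natrX divff // gt_eqF // (q_gt0 _).
have inc : forall i, (i < M)%N -> sp n i < sp n i.+1.
  by move=> i _; have := Es i; lra.
have mesh : forall i, (i < M)%N -> sp n i.+1 - sp n i < dl.
  by move=> i _; rewrite Es.
have H1 := Hdl M (sp n) (fun i => (p i).1) s0 sM inc mesh
  (fun i _ => let: And4 h1 _ _ _ := Hp i in h1).
have H2 := Hdl M (sp n) (fun i => (p i).2) s0 sM inc mesh
  (fun i _ => let: And4 _ h2 _ _ := Hp i in h2).
have Hsum : \sum_(i < M) (if `[< bad g n c i >] then c * h else 0) <=
   \sum_(i < M) g (p i).1 * (sp n i.+1 - sp n i) -
   \sum_(i < M) g (p i).2 * (sp n i.+1 - sp n i).
  rewrite -sumrB; apply: ler_sum => i _; rewrite Es -mulrBl.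
  case: asboolP => b.
    by rewrite ler_pM2r //; case: (Hp i) => _ _ /(_ b).
  by case: (Hp i) => _ _ _ /(_ b) ->; rewrite subrr mul0r.
have Hb : \sum_(i < M) (if `[< bad g n c i >] then c * h else 0) <= e * c / 3.
  move: H1 H2; rewrite !ltr_norml => /andP[? ?] /andP[? ?].
  have : eps * 2 = e * c / 3 by rewrite /eps; field.
  lra.
have E3 : \sum_(i < M) (if `[< bad g n c i >] then 3 * h else 0) =
   3 / c * \sum_(i < M) (if `[< bad g n c i >] then c * h else 0).
  rewrite mulr_sumr; apply: eq_bigr => i _; case: ifP => _; last by rewrite mulr0.
  by field; rewrite gt_eqF.
exists (cov (fun i => `[< bad g n c i >]) (sp n) M h); split.
- by apply: bigsetU_measurable => k _; case: ifP => _ //; exact: measurable_itv.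
- move=> t [t01 Ht].
  have [s' [s01 [st hs]]] := Ht h h0.
  have [i [iM bi ha hb]] : exists i, [/\ (i < M)%N, bad g n c i,
      sp n i - h <= t & t <= sp n i.+1 + h].
    have [st1 st2] : - h < s' - t /\ s' - t < h.
      by move: st; rewrite ltr_norml => /andP[].
    case: (lerP s' t) => hst.
      have [i [iM bi ha hb]] := @claim g n c s' t s01 t01 hst
         ltac:(rewrite -/h; lra) ltac:(by rewrite c2) (ltW c0).
      by exists i; split => //; rewrite -/h in ha hb; lra.
    have [i [iM bi ha hb]] := @claim g n c t s' t01 s01 (ltW hst)
         ltac:(rewrite -/h; lra) ltac:(by rewrite c2 distrC) (ltW c0).
    by exists i; split => //; rewrite -/h in ha hb; lra.
  apply: (@mem_cov _ _ _ _ t i) => //.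
    by rewrite /= asboolT.
  by apply/andP; split.
- apply: le_trans (leb_cover (fun i => `[< bad g n c i >]) M (ltW h0) (sp_S n)) _.
  rewrite lee_fin /= E3.
  have : 3 / c * \sum_(i < M) (if `[< bad g n c i >] then c * h else 0) <=
     3 / c * (e * c / 3).
    by rewrite ler_pM2l // divr_gt0.
  have -> : 3 / c * (e * c / 3) = e by field; rewrite gt_eqF.
  by [].
Qed.

Lemma part1 (f : nat -> R -> R) (finf : R -> R) (t : R) :
  in_classF f finf -> 0 <= t <= 1 -> continuous01_at finf t -> finf t != 0 ->
  ~ differentiable01 (x_f f) t.
Proof.
move=> [_ [Hu _]] t01 Hc ft0 [L HL].
set c : R := `|finf t|.
have c0 : 0 < c by rewrite normr_gt0.
move: HL => /cvgrPdist_lt /(_ (c / 16)) H1.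
have [d1 d10 Hd1] := near_within01_dnbhs (H1 ltac:(lra)).
have [d2 d20 Hd2] := cont01_eps Hc (ltac:(lra) : 0 < c / 4).
have [N0 HN0] := Hu (c / 4) ltac:(lra).
have mm0 : 0 < Num.min d1 d2 by rewrite lt_min d10 d20.
have [n [Nn hn]] := pick_n N0 mm0.
rewrite lt_min in hn; case/andP: hn => hn1 hn2.
have [k [kn /andP[lt tr]]] := dyadic_index n t01.
set h := (2 ^+ n)^-1 : R in hn1 hn2 *.
have h0 : 0 < h by rewrite invr_gt0 q_gt0.
set l := k%:R / 2 ^+ n : R in lt *.
set r := k.+1%:R / 2 ^+ n : R in tr *.
set m := (k.*2.+1)%:R / 2 ^+ n.+1 : R.
have qn := q_gt0 n.
have Er : r = l + h by rewrite /r /l /h -natr1; field; rewrite gt_eqF.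
have Em : m = l + h / 2.
  by rewrite /m /l /h -muln2 -natr1 natrM exprS; field; rewrite gt_eqF.
have l0 : 0 <= l by rewrite /l divr_ge0 // ltW.
have r1 : r <= 1.
  rewrite /r ler_pdivrMr // mul1r -natrX ler_nat; exact: kn.
set x := x_f f.
have gb : forall s, 0 <= s <= 1 -> `|s - t| <= h ->
    `|x s - x t - L * (s - t)| <= c / 16 * `|s - t|.
  move=> s s01 sth.
  have [->|st] := eqVneq s t; first by rewrite !subrr mulr0 subr0 normr0 mulr0.
  have := Hd1 s s01 st ltac:(lra).
  have stn : s - t != 0 by rewrite subr_eq0.
  have -> : x s - x t - L * (s - t) = (s - t) * ((x s - x t) / (s - t) - L).
    by field.
  rewrite normrM distrC mulrC => hlt.
  by rewrite [c / 16 * _]mulrC; apply: ler_wpM2l => //; exact: ltW.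
have hl := gb l ltac:(apply/andP; split; lra) ltac:(rewrite ler_norml; apply/andP; split; lra).
have hr := gb r ltac:(apply/andP; split; lra) ltac:(rewrite ler_norml; apply/andP; split; lra).
have hm := gb m ltac:(apply/andP; split; lra) ltac:(rewrite ler_norml; apply/andP; split; lra).
have Edd : dd x n k = (x m - x t - L * (m - t)) -
    ((x l - x t - L * (l - t)) + (x r - x t - L * (r - t))) / 2.
  rewrite /dd -/l -/r -/m Er Em; by field.
have ddb : `|dd x n k| <= c / 8 * h.
  rewrite Edd.
  have nl : `|l - t| <= h by rewrite ler_norml; apply/andP; split; lra.
  have nr : `|r - t| <= h by rewrite ler_norml; apply/andP; split; lra.
  have nm : `|m - t| <= h by rewrite ler_norml; apply/andP; split; lra.
  set A := x m - x t - L * (m - t) in hm *.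
  set B := x l - x t - L * (l - t) in hl *.
  set C := x r - x t - L * (r - t) in hr *.
  have := ler_normB A ((B + C) / 2).
  have -> : `|(B + C) / 2| = `|B + C| / 2.
    by rewrite normrM (ger0_norm (_ : 0 <= 2^-1)) // invr_ge0.
  have := ler_normD B C.
  have : c / 16 * `|m - t| <= c / 16 * h by rewrite ler_wpM2l // ltW // divr_gt0.
  have : c / 16 * `|l - t| <= c / 16 * h by rewrite ler_wpM2l // ltW // divr_gt0.
  have : c / 16 * `|r - t| <= c / 16 * h by rewrite ler_wpM2l // ltW // divr_gt0.
  lra.
rewrite /x dd_xf // -/l in ddb.
set p := 2 `^ (- (n%:R / 2)) in ddb.
have ph : h <= p := powR_ge_inv n.
have l01 : 0 <= l <= 1 by apply/andP; split; lra.
have ha1 := HN0 n Nn l l01.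
have lt2 : `|l - t| < d2.
  have : `|l - t| <= h by rewrite ler_norml; apply/andP; split; lra.
  lra.
have ha2 : `|finf l - finf t| < c / 4 := Hd2 l l01 lt2.
set a := f n l in ddb ha1 *.
have ca : c / 2 < `|a|.
  have := ha1; rewrite ltr_norml => /andP[a1 a2].
  have := ha2; rewrite ltr_norml => /andP[a3 a4].
  have ec : c = finf t \/ c = - finf t.
    by rewrite /c; case: (lerP 0 (finf t)) => sg;
      [left; rewrite ger0_norm | right; rewrite ltr0_norm].
  rewrite ltr_normr; apply/orP; case: ec => ec; [left|right]; lra.
have p0 : 0 < p by rewrite /p powR_gt0.
have np : `|p / 2| = p / 2 by rewrite ger0_norm // divr_ge0 // ltW.
rewrite normrM np in ddb.
have : `|a| * h <= `|a| * p by rewrite ler_wpM2l.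
nra.
Qed.
End S.

Unset Implicit Arguments.
Theorem proposition2p5 (R : realType) (f : nat -> R -> R) (finf : R -> R) :
  in_classF f finf ->
  (forall t : R, 0 <= t <= 1 -> continuous01_at finf t -> finf t != 0 ->
     ~ differentiable01 (x_f f) t) /\
  (@lebesgue_measure R).-negligible
     [set t : R | 0 <= t <= 1 /\ finf t != 0 /\ differentiable01 (x_f f) t].
Proof.
move=> Hf; split.
  by move=> t t01 hc ft0; exact: (part1 Hf t01 hc ft0).
have Hri : riemann_integrable01 finf by case: Hf => _ [].
apply: (negligibleS _ (negligible_bigcup (fun j => Dj_neg j Hri))).
move=> t [t01 [ft0 hd]].
have nc : ~ continuous01_at finf t.
  by move=> hc; exact: (part1 Hf t01 hc ft0 hd).
have [j hj] := notcont_D t01 nc.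
by exists j.
Qed.
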